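(* Let $E_1^S,\dots,E_{d_S}^S\ge 0$ be real numbers, $E\in\mathbb{R}$, and let $s:\mathbb{R}\to\mathbb{R}$ be twice differentiable. Set $\beta=s'(E)$ and define probability vectors $$p_k=\frac{e^{s(E-E_k^S)}}{\sum_{l=1}^{d_S}e^{s(E-E_l^S)}},\qquad q_k=\frac{e^{-\beta E_k^S}}{\sum_{l=1}^{d_S}e^{-\beta E_l^S}} .$$ Let $$\gamma_{\max}=\max_k\sup_{\xi\in[E-E_k^S,E]}\tfrac12 s''(\xi)(E_k^S)^2,\qquad \gamma_{\min}=\min_k\inf_{\xi\in[E-E_k^S,E]}\tfrac12 s''(\xi)(E_k^S)^2,$$ assumed finite. Then for every $k$, $|p_k-q_k|\le q_k\left(e^{\gamma_{\max}-\gamma_{\min}}-1\right)$, and consequently $$\tfrac12\sum_{k=1}^{d_S}|p_k-q_k|\le \tfrac12\left(e^{\gamma_{\max}-\gamma_{\min}}-1\right).$$ In particular, if there are $\eta>0$ and an integer $m\ge1$ such that $-\frac{4}{\eta^2m}\le s''(\xi)\le 0$ for all $\xi\in[E-\max_kE_k^S,E]$, and $\max_k E_k^S\le h$, then $\tfrac12\sum_k|p_k-q_k|\le \tfrac12\left(e^{2h^2/(\eta^2 m)}-1\right)$.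
   Context: Here $e^{s}$ plays the role of a smooth approximation of the number of bath energy levels in an energy window, the $E_k^S$ are the eigenvalues of a system Hamiltonian $H_S$ (so $h$ can be taken to be $\|H_S\|_\infty$ when $H_S\ge0$), $(p_k)$ are the eigenvalues of the reduced microcanonical state of the uncoupled system-plus-bath, and $(q_k)$ are the eigenvalues of the Gibbs state $e^{-\beta H_S}/\operatorname{Tr}e^{-\beta H_S}$. *)

(* Defs.v *)
From Stdlib Require Import Reals.
Open Scope R_scope.

Fixpoint rsum (f : nat -> R) (n : nat) : R :=
  match n with
  | O => 0
  | S n' => rsum f n' + f n'
  end.

(* rmaxn f n = max(0, f 0, ..., f (n-1)); for nonnegative f and n >= 1
   this is max_k f k. *)
Fixpoint rmaxn (f : nat -> R) (n : nat) : R :=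
  match n with
  | O => 0
  | S n' => Rmax (rmaxn f n') (f n')
  end.

(* Energies are indexed by k = 0 .. dS-1. *)
Definition p_vec (s : R -> R) (E : R) (ES : nat -> R) (dS : nat) (k : nat) : R :=
  exp (s (E - ES k)) / rsum (fun l => exp (s (E - ES l))) dS.

Definition q_vec (beta : R) (ES : nat -> R) (dS : nat) (k : nat) : R :=
  exp (- beta * ES k) / rsum (fun l => exp (- beta * ES l)) dS.

(* The set { 1/2 s''(xi) (E_k^S)^2 | k < dS, xi in [E - E_k^S, E] }.
   max_k sup_xi  = sup of this set, min_k inf_xi = inf of this set. *)
Definition gamma_set (s2 : R -> R) (E : R) (ES : nat -> R) (dS : nat) (y : R) : Prop :=
  exists k xi, (k < dS)%nat /\ E - ES k <= xi <= E /\ y = / 2 * s2 xi * (ES k) ^ 2.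

Definition is_lower_bound (P : R -> Prop) (m : R) : Prop := forall x, P x -> m <= x.
Definition is_glb (P : R -> Prop) (m : R) : Prop :=
  is_lower_bound P m /\ (forall b, is_lower_bound P b -> b <= m).

(* Main.v *)
Require Import Defs.
From Stdlib Require Import Reals Lra Psatz FunctionalExtensionality.
Open Scope R_scope.
Open Scope R_scope.

Lemma dlim_ext f g x l l' : (forall y, f y = g y) -> l = l' -> derivable_pt_lim f x l -> derivable_pt_lim g x l'.
Proof. intros H -> D. replace g with f; [exact D|]. apply FunctionalExtensionality.functional_extensionality; auto. Qed.

Lemma dlim_refl f f' E t : (forall x, derivable_pt_lim f x (f' x)) ->
  derivable_pt_lim (fun t => f (E - t)) t (- f' (E - t)).
Proof.
  intros Hf.
  assert (H1 : derivable_pt_lim (fct_cte E - id)%F t (0 - 1)).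
  { apply derivable_pt_lim_minus; [apply derivable_pt_lim_const|apply derivable_pt_lim_id]. }
  assert (H2 := derivable_pt_lim_comp _ f t _ _ H1 (Hf _)).
  eapply dlim_ext; [| | exact H2]; intros; unfold comp, fct_cte, id, minus_fct; simpl; try ring.
Qed.

Lemma taylor2 s s1 s2 E e :
  (forall x, derivable_pt_lim s x (s1 x)) ->
  (forall x, derivable_pt_lim s1 x (s2 x)) -> 0 <= e ->
  exists xi, E - e <= xi <= E /\ s (E - e) = s E - s1 E * e + / 2 * s2 xi * e ^ 2.
Proof.
  intros Hs1 Hs2 He.
  destruct (Req_dec e 0) as [->|Hne].
  { exists E. split; [lra|]. replace (E - 0) with E by ring. ring. }
  assert (Hp : 0 < e) by lra.
  set (K := (s (E - e) - s E + s1 E * e) / e ^ 2).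
  set (phi := fun t => s (E - t) - s E + s1 E * t - K * t ^ 2).
  assert (Dphi : forall t, derivable_pt_lim phi t (- s1 (E - t) + s1 E - K * (2 * t))).
  { intro t. unfold phi.
    assert (A := dlim_refl s s1 E t Hs1).
    assert (B : derivable_pt_lim (fun t => s1 E * t) t (s1 E * 1)).
    { apply (derivable_pt_lim_scal id). apply derivable_pt_lim_id. }
    assert (C : derivable_pt_lim (fun t => K * t ^ 2) t (K * (INR 2 * t ^ (2 - 1)))).
    { apply (derivable_pt_lim_scal (fun t => t ^ 2)). apply derivable_pt_lim_pow. }
    assert (D := derivable_pt_lim_minus _ _ t _ _ (derivable_pt_lim_plus _ _ t _ _
               (derivable_pt_lim_minus _ _ t _ _ A (derivable_pt_lim_const (s E) t)) B) C).
    eapply dlim_ext; [| | exact D]; intros; unfold plus_fct, minus_fct, fct_cte; simpl; try ring. }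
  destruct (MVT_cor2 phi _ 0 e Hp (fun c _ => Dphi c)) as [c [Hc1 Hc2]].
  assert (Hphie : phi e = 0).
  { unfold phi, K. field. lra. }
  assert (Hphi0 : phi 0 = 0).
  { unfold phi. replace (E - 0) with E by ring. ring. }
  assert (Hder : s1 E - s1 (E - c) - 2 * K * c = 0).
  { rewrite Hphie, Hphi0 in Hc1. assert (- s1 (E - c) + s1 E - K * (2 * c) = 0).
    { apply (Rmult_eq_reg_r e); [|lra]. lra. } lra. }
  set (psi := fun t => s1 E - s1 (E - t) - 2 * K * t).
  assert (Dpsi : forall t, derivable_pt_lim psi t (s2 (E - t) - 2 * K)).
  { intro t. unfold psi.
    assert (A := dlim_refl s1 s2 E t Hs2).
    assert (B : derivable_pt_lim (fun t => 2 * K * t) t (2 * K * 1)).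
    { apply (derivable_pt_lim_scal id). apply derivable_pt_lim_id. }
    assert (D := derivable_pt_lim_minus _ _ t _ _
               (derivable_pt_lim_minus _ _ t _ _ (derivable_pt_lim_const (s1 E) t) A) B).
    eapply dlim_ext; [| | exact D]; intros; unfold plus_fct, minus_fct, fct_cte; simpl; try ring. }
  destruct (MVT_cor2 psi _ 0 c (proj1 Hc2) (fun c _ => Dpsi c)) as [d [Hd1 Hd2]].
  assert (Hpsi0 : psi 0 = 0).
  { unfold psi. replace (E - 0) with E by ring. ring. }
  assert (Hpsic : psi c = 0) by (unfold psi; lra).
  rewrite Hpsi0, Hpsic in Hd1.
  assert (Hs2d : s2 (E - d) - 2 * K = 0).
  { apply (Rmult_eq_reg_r c); [|lra]. lra. }
  exists (E - d). split; [lra|].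
  assert (K = / 2 * s2 (E - d)) by lra.
  assert (Hk : K * e ^ 2 = s (E - e) - s E + s1 E * e) by (unfold K; field; lra).
  rewrite <- H. lra.
Qed.

Lemma rsum_le f g n : (forall k, (k < n)%nat -> f k <= g k) -> rsum f n <= rsum g n.
Proof. induction n; simpl; intros H; [lra|]. assert (H1 := H n (Nat.lt_succ_diag_r n)).
  assert (rsum f n <= rsum g n) by (apply IHn; intros; apply H; lia). lra. Qed.

Lemma rsum_ext f g n : (forall k, f k = g k) -> rsum f n = rsum g n.
Proof. intros H; induction n; simpl; [ring|]. rewrite IHn, H; ring. Qed.

Lemma rsum_scal c f n : rsum (fun k => c * f k) n = c * rsum f n.
Proof. induction n; simpl; [ring|]. rewrite IHn; ring. Qed.

Lemma rsum_pos f n : (0 < n)%nat -> (forall k, (k < n)%nat -> 0 < f k) -> 0 < rsum f n.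
Proof. induction n; simpl; intros Hn H; [lia|]. destruct n.
  - simpl. assert (H0 := H 0%nat ltac:(lia)). lra.
  - assert (0 < rsum f (S n)) by (apply IHn; [lia|intros; apply H; lia]).
    assert (H1 := H (S n) ltac:(lia)). lra. Qed.

Lemma rmaxn_ge f n k : (k < n)%nat -> f k <= rmaxn f n.
Proof. induction n; simpl; intros H; [lia|].
  destruct (Nat.eq_dec k n) as [->|Hne]; [apply Rmax_r|].
  eapply Rle_trans; [apply IHn; lia|apply Rmax_l]. Qed.

Lemma core n (u w : nat -> R) (C a b : R) : (0 < n)%nat -> 0 < C ->
  (forall k, (k < n)%nat -> 0 < w k) ->
  (forall k, (k < n)%nat -> C * w k * exp a <= u k <= C * w k * exp b) ->
  (forall k, (k < n)%nat -> Rabs (u k / rsum u n - w k / rsum w n) <= w k / rsum w n * (exp (b - a) - 1)) /\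
  / 2 * rsum (fun k => Rabs (u k / rsum u n - w k / rsum w n)) n <= / 2 * (exp (b - a) - 1).
Proof.
  intros Hn HC Hw Hu.
  set (U := rsum u n). set (W := rsum w n).
  assert (HW : 0 < W) by (apply rsum_pos; auto).
  assert (ea := exp_pos a). assert (eb := exp_pos b).
  assert (HX : exp b = exp (b - a) * exp a) by (rewrite <- exp_plus; f_equal; ring).
  set (X := exp (b - a)) in *.
  assert (HX0 : 0 < X) by apply exp_pos.
  assert (HUl : C * exp a * W <= U).
  { unfold U, W. rewrite <- rsum_scal. apply rsum_le. intros k Hk.
    assert (H := Hu k Hk). nra. }
  assert (HUu : U <= C * exp b * W).
  { unfold U, W. rewrite <- rsum_scal. apply rsum_le. intros k Hk.
    assert (H := Hu k Hk). nra. }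
  assert (HU : 0 < U) by (assert (0 < C * exp a * W) by (apply Rmult_lt_0_compat; [apply Rmult_lt_0_compat|]; lra); lra).
  assert (Hk : forall k, (k < n)%nat -> Rabs (u k / U - w k / W) <= w k / W * (X - 1)).
  { intros k Hk. destruct (Hu k Hk) as [Hl Hh]. assert (Hwk := Hw k Hk).
    assert (K : - (w k * U * (X - 1)) <= u k * W - w k * U <= w k * U * (X - 1)).
    { split.
      - assert (u k * W >= C * w k * exp a * W) by nra.
        destruct (Rle_dec X 2).
        + assert (w k * U * (2 - X) <= w k * (C * exp b * W) * (2 - X)).
          { apply Rmult_le_compat_r; [lra|]. apply Rmult_le_compat_l; lra. }
          assert (C * w k * exp a * W - w k * (C * exp b * W) * (2 - X) = C * w k * W * exp a * (X - 1) ^ 2)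
            by (rewrite HX; ring).
          assert (0 <= C * w k * W * exp a * (X - 1) ^ 2).
          { apply Rmult_le_pos; [|apply pow2_ge_0]. repeat apply Rmult_le_pos; lra. }
          nra.
        + assert (0 <= w k * U) by nra.
          assert (0 <= C * w k * exp a * W) by (repeat apply Rmult_le_pos; lra). nra.
      - assert (u k * W <= C * w k * exp b * W) by nra.
        assert (C * w k * exp b * W = w k * X * (C * exp a * W)) by (rewrite HX; ring).
        assert (w k * X * (C * exp a * W) <= w k * X * U).
        { apply Rmult_le_compat_l; [|lra]. nra. }
        nra. }
    apply Rabs_le.
    replace (u k / U - w k / W) with ((u k * W - w k * U) * / (U * W)) by (field; lra).
    replace (w k / W * (X - 1)) with (w k * U * (X - 1) * / (U * W)) by (field; lra).
    assert (0 < / (U * W)) by (apply Rinv_0_lt_compat; nra).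
    split; [rewrite Ropp_mult_distr_l|]; apply Rmult_le_compat_r; lra. }
  split; [exact Hk|].
  apply Rmult_le_compat_l; [lra|].
  apply Rle_trans with (rsum (fun k => (X - 1) * (w k / W)) n).
  { apply rsum_le. intros k Hk'. rewrite Rmult_comm. apply Hk; auto. }
  rewrite rsum_scal.
  assert (rsum (fun k => w k / W) n = 1).
  { rewrite (rsum_ext _ (fun k => / W * w k)) by (intros; unfold Rdiv; ring).
    rewrite rsum_scal. fold W. field. lra. }
  rewrite H. lra.
Qed.

Lemma exp_le' x y : x <= y -> exp x <= exp y.
Proof. intros [H|H]; [left; apply exp_increasing; auto|right; rewrite H; auto]. Qed.

Lemma bridge dS ES E s s1 s2 a b :
  (0 < dS)%nat -> (forall k, (k < dS)%nat -> 0 <= ES k) ->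
  (forall x, derivable_pt_lim s x (s1 x)) ->
  (forall x, derivable_pt_lim s1 x (s2 x)) ->
  (forall k xi, (k < dS)%nat -> E - ES k <= xi <= E -> a <= / 2 * s2 xi * ES k ^ 2 <= b) ->
  (forall k, (k < dS)%nat ->
        Rabs (p_vec s E ES dS k - q_vec (s1 E) ES dS k)
          <= q_vec (s1 E) ES dS k * (exp (b - a) - 1)) /\
     / 2 * rsum (fun k => Rabs (p_vec s E ES dS k - q_vec (s1 E) ES dS k)) dS
       <= / 2 * (exp (b - a) - 1).
Proof.
  intros HdS HES Hs1 Hs2 Hg.
  unfold p_vec, q_vec.
  apply (core dS (fun l => exp (s (E - ES l))) (fun l => exp (- s1 E * ES l)) (exp (s E)) a b HdS (exp_pos _)).
  - intros; apply exp_pos.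
  - intros k Hk. destruct (taylor2 s s1 s2 E (ES k) Hs1 Hs2 (HES k Hk)) as [xi [Hxi Heq]].
    rewrite Heq. destruct (Hg k xi Hk Hxi) as [H1 H2].
    replace (s E - s1 E * ES k + / 2 * s2 xi * ES k ^ 2) with (s E + - s1 E * ES k + / 2 * s2 xi * ES k ^ 2) by ring.
    rewrite !exp_plus.
    assert (0 < exp (s E) * exp (- s1 E * ES k)) by (apply Rmult_lt_0_compat; apply exp_pos).
    split; apply Rmult_le_compat_l; try lra; apply exp_le'; lra.
Qed.

Theorem mainTheorem3
  (dS : nat) (ES : nat -> R) (E : R) (s s1 s2 : R -> R)
  (HdS : (0 < dS)%nat)
  (HES : forall k, (k < dS)%nat -> 0 <= ES k)
  (Hs1 : forall x, derivable_pt_lim s x (s1 x))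
  (Hs2 : forall x, derivable_pt_lim s1 x (s2 x)) :
  (forall gmax gmin : R,
     is_lub (gamma_set s2 E ES dS) gmax ->
     is_glb (gamma_set s2 E ES dS) gmin ->
     (forall k, (k < dS)%nat ->
        Rabs (p_vec s E ES dS k - q_vec (s1 E) ES dS k)
          <= q_vec (s1 E) ES dS k * (exp (gmax - gmin) - 1)) /\
     / 2 * rsum (fun k => Rabs (p_vec s E ES dS k - q_vec (s1 E) ES dS k)) dS
       <= / 2 * (exp (gmax - gmin) - 1)) /\
  (forall (eta : R) (m : nat) (h : R),
     0 < eta -> (1 <= m)%nat ->
     (forall xi, E - rmaxn ES dS <= xi <= E ->
        - (4 / (eta ^ 2 * INR m)) <= s2 xi <= 0) ->
     rmaxn ES dS <= h ->
     / 2 * rsum (fun k => Rabs (p_vec s E ES dS k - q_vec (s1 E) ES dS k)) dS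
       <= / 2 * (exp (2 * h ^ 2 / (eta ^ 2 * INR m)) - 1)).
Proof.
  split.
  - intros gmax gmin [Hub _] [Hlb _].
    apply (bridge dS ES E s s1 s2); auto.
    intros k xi Hk Hxi.
    assert (G : gamma_set s2 E ES dS (/ 2 * s2 xi * ES k ^ 2)) by (exists k, xi; auto).
    split; [apply Hlb; auto|apply Hub; auto].
  - intros eta m h Heta Hm Hs2b Hh.
    assert (Hm' : 0 < INR m) by (apply lt_0_INR; lia).
    assert (Hc : 0 <= 4 / (eta ^ 2 * INR m)).
    { unfold Rdiv. apply Rmult_le_pos; [lra|]. left; apply Rinv_0_lt_compat.
      apply Rmult_lt_0_compat; [apply pow_lt|]; lra. }
    replace (2 * h ^ 2 / (eta ^ 2 * INR m)) with (0 - (/ 2 * (- (4 / (eta ^ 2 * INR m))) * h ^ 2))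
      by (field; split; lra).
    destruct (bridge dS ES E s s1 s2 (/ 2 * (- (4 / (eta ^ 2 * INR m))) * h ^ 2) 0 HdS HES Hs1 Hs2) as [_ HR].
    2: exact HR.
    intros k xi Hk Hxi.
    assert (Hmk := rmaxn_ge ES dS k Hk). assert (H0 := HES k Hk).
    destruct (Hs2b xi ltac:(lra)) as [A B].
    set (c := 4 / (eta ^ 2 * INR m)) in *.
    assert (Hsq : ES k ^ 2 <= h ^ 2) by (apply pow_incr; lra).
    assert (0 <= ES k ^ 2) by (apply pow2_ge_0).
    split; nra.
Qed.
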